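(* Let $\mathcal{C}$ be a bicomplete category and let $\mathscr{E}'$ be the totally ordered category with three objects $\varnothing\to E\to *$. Let $F:\mathcal{C}\to\mathscr{E}'$ be any functor. Then the following defines a model structure $\mathbb{C}^F$ on $\mathcal{C}$: \[\mathbb{C}^F_{cof}=\{A\to B : F(B)\neq\varnothing\}\cup\mathrm{iso}\,\mathcal{C},\qquad \mathbb{C}^F_{fib}=\{X\to Y : F(X)\neq *\}\cup\mathrm{iso}\,\mathcal{C},\] \[\mathbb{C}^F_{we}=\{f : F(f)=1_\varnothing \text{ or } F(f)=1_*\}\cup\mathrm{iso}\,\mathcal{C}.\]
   Context: Bicomplete means having all finite limits and finite colimits; $\mathrm{iso}\,\mathcal{C}$ denotes the isomorphisms of $\mathcal{C}$. A model structure is a triple (weak equivalences, cofibrations, fibrations) of subcategories such that (cof, fib $\cap$ we) and (cof $\cap$ we, fib) are weak factorization systems (pairs $(\mathcal{L},\mathcal{R})$ with $\mathcal{L}$ = maps with left lifting property against $\mathcal{R}$, $\mathcal{R}$ = maps with right lifting property against $\mathcal{L}$, and every map factoring as an $\mathcal{L}$-map followed by an $\mathcal{R}$-map), and weak equivalences satisfy two-out-of-three. *)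

(* Defs.v *)
From Stdlib Require Import List.
Set Implicit Arguments.
Unset Strict Implicit.

Record Category := {
  Obj :> Type;
  Hom : Obj -> Obj -> Type;
  idm : forall A, Hom A A;
  comp : forall A B C, Hom B C -> Hom A B -> Hom A C;
  comp_id_l : forall A B (f : Hom A B), comp (idm B) f = f;
  comp_id_r : forall A B (f : Hom A B), comp f (idm A) = f;
  comp_assoc : forall A B C D (h : Hom C D) (g : Hom B C) (f : Hom A B),
      comp h (comp g f) = comp (comp h g) f
}.
Arguments Hom {c} _ _.
Arguments idm {c} _.
Arguments comp {c A B C} _ _.

Record Functor (J C : Category) := {
  fobj :> J -> C;
  fmap : forall a b, Hom a b -> Hom (fobj a) (fobj b);
  fmap_id : forall a, fmap (idm a) = idm (fobj a);
  fmap_comp : forall a b c (g : Hom b c) (f : Hom a b),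
      fmap (comp g f) = comp (fmap g) (fmap f)
}.
Arguments fmap {J C} f0 {a b} _.

Definition FiniteCat (J : Category) : Prop :=
  (exists l : list (Obj J), forall x, In x l) /\
  (forall a b : J, exists l : list (Hom a b), forall u, In u l).

Definition IsLimit (J C : Category) (D : Functor J C) (L : C)
    (leg : forall j, Hom L (D j)) : Prop :=
  (forall j k (u : Hom j k), comp (fmap D u) (leg j) = leg k) /\
  (forall (M : C) (leg' : forall j, Hom M (D j)),
      (forall j k (u : Hom j k), comp (fmap D u) (leg' j) = leg' k) ->
      exists h : Hom M L, (forall j, comp (leg j) h = leg' j) /\
        (forall h' : Hom M L, (forall j, comp (leg j) h' = leg' j) -> h' = h)).

Definition IsColimit (J C : Category) (D : Functor J C) (L : C)
    (leg : forall j, Hom (D j) L) : Prop :=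
  (forall j k (u : Hom j k), comp (leg k) (fmap D u) = leg j) /\
  (forall (M : C) (leg' : forall j, Hom (D j) M),
      (forall j k (u : Hom j k), comp (leg' k) (fmap D u) = leg' j) ->
      exists h : Hom L M, (forall j, comp h (leg j) = leg' j) /\
        (forall h' : Hom L M, (forall j, comp h' (leg j) = leg' j) -> h' = h)).

Definition Bicomplete (C : Category) : Prop :=
  forall (J : Category), FiniteCat J -> forall D : Functor J C,
    (exists (L : C) (leg : forall j, Hom L (D j)), IsLimit leg) /\
    (exists (L : C) (leg : forall j, Hom (D j) L), IsColimit leg).

Definition MorClass (C : Category) := forall A B : C, Hom A B -> Prop.

Definition is_iso (C : Category) (A B : C) (f : Hom A B) : Prop :=
  exists g : Hom B A, comp g f = idm A /\ comp f g = idm B.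

Definition isoC (C : Category) : MorClass C := fun A B f => is_iso f.

Definition cap (C : Category) (K L : MorClass C) : MorClass C :=
  fun A B f => K A B f /\ L A B f.

Definition lifts (C : Category) (A B X Y : C) (f : Hom A B) (g : Hom X Y) : Prop :=
  forall (u : Hom A X) (v : Hom B Y), comp g u = comp v f ->
    exists d : Hom B X, comp d f = u /\ comp g d = v.

Definition WFS (C : Category) (L R : MorClass C) : Prop :=
  (forall A B (f : Hom A B),
      L A B f <-> (forall X Y (g : Hom X Y), R X Y g -> lifts f g)) /\
  (forall X Y (g : Hom X Y),
      R X Y g <-> (forall A B (f : Hom A B), L A B f -> lifts f g)) /\
  (forall A B (f : Hom A B), exists (M : C) (i : Hom A M) (p : Hom M B),
      L A M i /\ R M B p /\ f = comp p i).

Definition Subcategory (C : Category) (K : MorClass C) : Prop :=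
  (forall A : C, K A A (idm A)) /\
  (forall A B D (f : Hom A B) (g : Hom B D), K A B f -> K B D g -> K A D (comp g f)).

Definition TwoOutOfThree (C : Category) (W : MorClass C) : Prop :=
  forall A B D (f : Hom A B) (g : Hom B D),
    (W A B f -> W B D g -> W A D (comp g f)) /\
    (W A B f -> W A D (comp g f) -> W B D g) /\
    (W B D g -> W A D (comp g f) -> W A B f).

Definition ModelStructure (C : Category) (we cof fib : MorClass C) : Prop :=
  Subcategory we /\ Subcategory cof /\ Subcategory fib /\
  WFS cof (cap fib we) /\ WFS (cap cof we) fib /\ TwoOutOfThree we.

Inductive E3 := Emp | Emid | Estar.

Definition E3rank (x : E3) : nat := match x with Emp => 0 | Emid => 1 | Estar => 2 end.

Definition E3hom (x y : E3) : Type := if Nat.leb (E3rank x) (E3rank y) then unit else Empty_set.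

Definition E3id (x : E3) : E3hom x x := match x with Emp => tt | Emid => tt | Estar => tt end.

Definition E3comp (x y z : E3) : E3hom y z -> E3hom x y -> E3hom x z.
Proof. destruct x, y, z; simpl; intros g f; first [exact tt | exact (match f with end) | exact (match g with end)]. Defined.

Lemma E3hom_unique (x y : E3) (f g : E3hom x y) : f = g.
Proof. destruct x, y; simpl in *; destruct f; try destruct g; reflexivity. Qed.

Definition Eprime : Category.
Proof.
  refine {| Obj := E3; Hom := E3hom; idm := E3id; comp := E3comp |};
  intros; apply E3hom_unique.
Defined.

Definition cofF (C : Category) (F : Functor C Eprime) : MorClass C :=
  fun A B f => F B <> Emp \/ is_iso f.

Definition fibF (C : Category) (F : Functor C Eprime) : MorClass C :=
  fun X Y f => F X <> Estar \/ is_iso f.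

(* In the thin category E', F(f) = 1_x iff F(source) = F(target) = x. *)
Definition weF (C : Category) (F : Functor C Eprime) : MorClass C :=
  fun A B f => (F A = Emp /\ F B = Emp) \/ (F A = Estar /\ F B = Estar) \/ is_iso f.

(* Main.v *)
Require Import Defs.
From Stdlib Require Import Lia.
Set Implicit Arguments.
Unset Strict Implicit.

Section S.
Variable C : Category.
Variable F : Functor C Eprime.

Lemma mono (A B : C) (f : Hom A B) : E3rank (F A) <= E3rank (F B).
Proof.
  assert (h : E3hom (F A) (F B)) by exact (fmap F f).
  revert h. destruct (F A), (F B); simpl; intros; try lia; destruct h.
Qed.

Lemma iso_eq (A B : C) (f : Hom A B) : is_iso f -> F A = F B.
Proof.
  intros [g _]. pose proof (mono f). pose proof (mono g).
  destruct (F A), (F B); simpl in *; try lia; reflexivity.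
Qed.

Lemma iso_id (A : C) : is_iso (idm A).
Proof. exists (idm A). rewrite comp_id_l. split; reflexivity. Qed.

Lemma iso_comp (A B D : C) (f : Hom A B) (g : Hom B D) :
  is_iso f -> is_iso g -> is_iso (comp g f).
Proof.
  intros [f' [H1 H2]] [g' [H3 H4]]. exists (comp f' g'). split.
  - rewrite comp_assoc, <- (comp_assoc f'), H3, comp_id_r. exact H1.
  - rewrite comp_assoc, <- (comp_assoc g), H2, comp_id_r. exact H4.
Qed.

Lemma iso_inv (A B : C) (f : Hom A B) (f' : Hom B A) :
  comp f' f = idm A -> comp f f' = idm B -> is_iso f'.
Proof. intros H1 H2. exists f. split; assumption. Qed.

Lemma lifts_iso_l (A B X Y : C) (f : Hom A B) (g : Hom X Y) : is_iso f -> lifts f g.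
Proof.
  intros [f' [H1 H2]] u v H. exists (comp u f'). split.
  - rewrite <- comp_assoc, H1, comp_id_r. reflexivity.
  - rewrite comp_assoc, H, <- comp_assoc, H2, comp_id_r. reflexivity.
Qed.

Lemma lifts_iso_r (A B X Y : C) (f : Hom A B) (g : Hom X Y) : is_iso g -> lifts f g.
Proof.
  intros [g' [H1 H2]] u v H. exists (comp g' v). split.
  - rewrite <- comp_assoc, <- H, comp_assoc, H1, comp_id_l. reflexivity.
  - rewrite comp_assoc, H2, comp_id_l. reflexivity.
Qed.

Lemma self_lift (A B : C) (f : Hom A B) : lifts f f -> is_iso f.
Proof.
  intros H. destruct (H (idm A) (idm B)) as [d [H1 H2]].
  - rewrite comp_id_l, comp_id_r. reflexivity.
  - exists d. split; assumption.
Qed.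

Lemma we_eq (A B : C) (f : Hom A B) : weF F f -> F A = F B.
Proof.
  intros [[H1 H2]|[[H1 H2]|H]]; [congruence|congruence|exact (iso_eq H)].
Qed.

Lemma comp_cancel_r (A B D : C) (f : Hom A B) (g : Hom B D) :
  is_iso f -> is_iso (comp g f) -> is_iso g.
Proof.
  intros Hf Hgf. destruct Hf as [f' [H1 H2]].
  assert (E : g = comp (comp g f) f').
  { rewrite <- comp_assoc, H2, comp_id_r. reflexivity. }
  rewrite E. apply iso_comp; [|exact Hgf]. eapply iso_inv; eassumption.
Qed.

Lemma comp_cancel_l (A B D : C) (f : Hom A B) (g : Hom B D) :
  is_iso g -> is_iso (comp g f) -> is_iso f.
Proof.
  intros Hg Hgf. destruct Hg as [g' [H1 H2]].
  assert (E : f = comp g' (comp g f)).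
  { rewrite comp_assoc, H1, comp_id_l. reflexivity. }
  rewrite E. apply iso_comp; [exact Hgf|]. eapply iso_inv; eassumption.
Qed.

Lemma lift1 (A B X Y : C) (f : Hom A B) (g : Hom X Y) :
  cofF F f -> cap (fibF F) (weF F) g -> lifts f g.
Proof.
  intros [Hf|Hf] [Hg1 Hg2]; [|apply lifts_iso_l; exact Hf].
  destruct Hg1 as [Hg1|Hg1]; [|apply lifts_iso_r; exact Hg1].
  destruct Hg2 as [[H1 H2]|[[H1 H2]|Hg2]]; [| congruence | apply lifts_iso_r; exact Hg2].
  intros u v _. exfalso. pose proof (mono v).
  destruct (F B), (F Y); simpl in *; try lia; congruence.
Qed.

Lemma lift2 (A B X Y : C) (f : Hom A B) (g : Hom X Y) :
  cap (cofF F) (weF F) f -> fibF F g -> lifts f g.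
Proof.
  intros [Hf1 Hf2] [Hg|Hg]; [|apply lifts_iso_r; exact Hg].
  destruct Hf1 as [Hf1|Hf1]; [|apply lifts_iso_l; exact Hf1].
  destruct Hf2 as [[H1 H2]|[[H1 H2]|Hf2]]; [congruence| | apply lifts_iso_l; exact Hf2].
  intros u v _. exfalso. pose proof (mono u).
  destruct (F A), (F X); simpl in *; try lia; congruence.
Qed.

End S.

Theorem proposition4 (C : Category) (HC : Bicomplete C) (F : Functor C Eprime) :
  ModelStructure (weF F) (cofF F) (fibF F).
Proof.
  split; [|split; [|split; [|split; [|split]]]].
  - split.
    + intros A. right; right. apply iso_id.
    + intros A B D f g Hf Hg.
      pose proof (we_eq Hf) as E1. pose proof (we_eq Hg) as E2.
      destruct (F B) eqn:EB.
      * left; split; congruence.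
      * destruct Hf as [[? ?]|[[? ?]|Hf]]; try congruence.
        destruct Hg as [[? ?]|[[? ?]|Hg]]; try congruence.
        right; right; apply iso_comp; assumption.
      * right; left; split; congruence.
  - split.
    + intros A. right. apply iso_id.
    + intros A B D f g Hf Hg. destruct Hg as [Hg|Hg]; [left; exact Hg|].
      pose proof (iso_eq F Hg) as E.
      destruct Hf as [Hf|Hf]; [left; congruence|].
      right; apply iso_comp; assumption.
  - split.
    + intros A. right. apply iso_id.
    + intros A B D f g Hf Hg. destruct Hf as [Hf|Hf]; [left; exact Hf|].
      pose proof (iso_eq F Hf) as E.
      destruct Hg as [Hg|Hg]; [left; congruence|].
      right; apply iso_comp; assumption.
  - split; [|split].
    + intros A B f. split.
      * intros Hf X Y g Hg. apply (lift1 (F:=F)); assumption.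
      * intros H. destruct (F B) eqn:EB.
        -- right. apply self_lift. apply H.
           pose proof (mono F f). rewrite EB in H0.
           assert (EA : F A = Emp) by (destruct (F A); simpl in *; try lia; reflexivity).
           split; [left; congruence | left; split; assumption].
        -- left; congruence.
        -- left; congruence.
    + intros X Y g. split.
      * intros Hg A B f Hf. apply (lift1 (F:=F)); assumption.
      * intros H. destruct (F Y) eqn:EY.
        -- pose proof (mono F g). rewrite EY in H0.
           assert (EX : F X = Emp) by (destruct (F X); simpl in *; try lia; reflexivity).
           split; [left; congruence | left; split; assumption].
        -- assert (Hi : is_iso g) by (apply self_lift, H; left; congruence).
           split; right; [|right]; exact Hi.
        -- assert (Hi : is_iso g) by (apply self_lift, H; left; congruence).
           split; right; [|right]; exact Hi.
    + intros A B f. destruct (F B) eqn:EB.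
      * exists A, (idm A), f. split; [right; apply iso_id|split].
        -- pose proof (mono F f). rewrite EB in H.
           assert (EA : F A = Emp) by (destruct (F A); simpl in *; try lia; reflexivity).
           split; [left; congruence | left; split; assumption].
        -- rewrite comp_id_r; reflexivity.
      * exists B, f, (idm B). split; [left; congruence|split].
        -- split; right; [|right]; apply iso_id.
        -- rewrite comp_id_l; reflexivity.
      * exists B, f, (idm B). split; [left; congruence|split].
        -- split; right; [|right]; apply iso_id.
        -- rewrite comp_id_l; reflexivity.
  - split; [|split].
    + intros A B f. split.
      * intros Hf X Y g Hg. apply (lift2 (F:=F)); assumption.
      * intros H. destruct (F A) eqn:EA.
        -- assert (Hi : is_iso f) by (apply self_lift, H; left; congruence).
           split; right; [|right]; exact Hi.
        -- assert (Hi : is_iso f) by (apply self_lift, H; left; congruence).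
           split; right; [|right]; exact Hi.
        -- pose proof (mono F f). rewrite EA in H0.
           assert (EB : F B = Estar) by (destruct (F B); simpl in *; try lia; reflexivity).
           split; [left; congruence | right; left; split; assumption].
    + intros X Y g. split.
      * intros Hg A B f Hf. apply (lift2 (F:=F)); assumption.
      * intros H. destruct (F X) eqn:EX.
        -- left; congruence.
        -- left; congruence.
        -- right. apply self_lift. apply H.
           pose proof (mono F g). rewrite EX in H0.
           assert (EY : F Y = Estar) by (destruct (F Y); simpl in *; try lia; reflexivity).
           split; [left; congruence | right; left; split; assumption].
    + intros A B f. destruct (F A) eqn:EA.
      * exists A, (idm A), f. split; [split; right; [|right]; apply iso_id|split].
        -- left; congruence.
        -- rewrite comp_id_r; reflexivity.
      * exists A, (idm A), f. split; [split; right; [|right]; apply iso_id|split].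
        -- left; congruence.
        -- rewrite comp_id_r; reflexivity.
      * exists B, f, (idm B). split; [|split].
        -- pose proof (mono F f). rewrite EA in H.
           assert (EB : F B = Estar) by (destruct (F B); simpl in *; try lia; reflexivity).
           split; [left; congruence | right; left; split; assumption].
        -- right; apply iso_id.
        -- rewrite comp_id_l; reflexivity.
  - intros A B D f g. split; [|split].
    + intros Hf Hg.
      pose proof (we_eq Hf) as E1. pose proof (we_eq Hg) as E2.
      destruct (F B) eqn:EB.
      * left; split; congruence.
      * destruct Hf as [[? ?]|[[? ?]|Hf]]; try congruence.
        destruct Hg as [[? ?]|[[? ?]|Hg]]; try congruence.
        right; right; apply iso_comp; assumption.
      * right; left; split; congruence.
    + intros Hf Hgf.
      pose proof (we_eq Hf) as E1. pose proof (we_eq Hgf) as E2.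
      destruct (F B) eqn:EB.
      * left; split; congruence.
      * destruct Hf as [[? ?]|[[? ?]|Hf]]; try congruence.
        destruct Hgf as [[? ?]|[[? ?]|Hgf]]; try congruence.
        right; right; eapply comp_cancel_r; eassumption.
      * right; left; split; congruence.
    + intros Hg Hgf.
      pose proof (we_eq Hg) as E1. pose proof (we_eq Hgf) as E2.
      destruct (F B) eqn:EB.
      * left; split; congruence.
      * destruct Hg as [[? ?]|[[? ?]|Hg]]; try congruence.
        destruct Hgf as [[? ?]|[[? ?]|Hgf]]; try congruence.
        right; right; eapply comp_cancel_l; eassumption.
      * right; left; split; congruence.
Qed.
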